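(* Let $\Phi$ be a Leonard system in $\mathcal A$ with eigenvalue sequence $\theta_0,\dots,\theta_d$ and dual eigenvalue sequence $\theta^*_0,\dots,\theta^*_d$, let $u_0,\dots,u_d$ be its polynomials as defined below, and let $u^*_0,\dots,u^*_d$ be the corresponding polynomials for $\Phi^*$. Then $$u_i(\theta_j)=u^*_j(\theta^*_i)\qquad(0\le i,j\le d).$$
   Context: Let $\mathbb K$ be a field, $d\ge 0$ an integer, and $\mathcal A$ a $\mathbb K$-algebra isomorphic to $\mathrm{Mat}_{d+1}(\mathbb K)$, with identity $I$ and trace $\mathrm{tr}$. An element $A\in\mathcal A$ is multiplicity-free if it has $d+1$ mutually distinct eigenvalues in $\mathbb K$; if $\theta_0,\dots,\theta_d$ is an ordering of them, the primitive idempotent of $A$ associated with $\theta_i$ is $E_i=\prod_{j\ne i}(A-\theta_jI)/(\theta_i-\theta_j)$. A Leonard system in $\mathcal A$ is a sequence $\Phi=(A;A^*;\{E_i\}_{i=0}^d;\{E^*_i\}_{i=0}^d)$ such that: (i) $A,A^*$ are multiplicity-free; (ii) $E_0,\dots,E_d$ is an ordering of the primitive idempotents of $A$; (iii) $E^*_0,\dots,E^*_d$ is an ordering of those of $A^*$; (iv) $E_iA^*E_j=0$ if $|i-j|>1$ and $\ne0$ if $|i-j|=1$ $(0\le i,j\le d)$; (v) $E^*_iAE^*_j=0$ if $|i-j|>1$ and $\neq0$ if $|i-j|=1$ $(0\le i,j\le d)$. $\theta_i$ (resp. $\theta^*_i$) is the eigenvalue of $A$ (resp. $A^*$) associated with $E_i$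 (resp. $E^*_i$). The dual Leonard system is $\Phi^*=(A^*;A;\{E^*_i\}_{i=0}^d;\{E_i\}_{i=0}^d)$. Define $a_i=\mathrm{tr}(E^*_iA)$ $(0\le i\le d)$, $x_i=\mathrm{tr}(E^*_iAE^*_{i-1}A)$ $(1\le i\le d)$, $x_0=0$, and polynomials $p_0,\dots,p_{d+1}$ by $p_0=1$, $p_{-1}=0$, $\lambda p_i=p_{i+1}+a_ip_i+x_ip_{i-1}$ $(0\le i\le d)$. One has $p_i(\theta_0)\ne0$ for $0\le i\le d$, and $u_i:=p_i/p_i(\theta_0)$ $(0\le i\le d)$. *)

(* Defs.v *)
From HB Require Import structures.
From mathcomp Require Import all_boot all_order all_algebra.
Set Implicit Arguments. Unset Strict Implicit. Unset Printing Implicit Defensive.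
Import Order.TTheory GRing.Theory Num.Theory.
Local Open Scope ring_scope.

(* The algebra A is taken to be 'M[K]_(d.+1) itself, with its usual trace. *)

Section LS.
Variables (K : fieldType) (d : nat).
Notation Mat := 'M[K]_d.+1.

Definition prim_idem (B : Mat) (th : 'I_d.+1 -> K) (i : 'I_d.+1) : Mat :=
  \prod_(j < d.+1 | j != i) ((th i - th j)^-1 *: (B - (th j)%:M)).

(* multiplicity-free with th an ordering of its d+1 (distinct) eigenvalues *)
Definition eig_ordering (B : Mat) (th : 'I_d.+1 -> K) : Prop :=
  injective th /\ forall i, eigenvalue B (th i).

Definition tridiag_cond (F : 'I_d.+1 -> Mat) (C : Mat) : Prop :=
  forall i j : 'I_d.+1,
    (((i.+1 < j)%N \/ (j.+1 < i)%N) -> F i *m C *m F j = 0) /\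
    (((i.+1 = j)%N \/ (j.+1 = i)%N) -> F i *m C *m F j != 0).

Definition leonard_system (A As : Mat) (th ths : 'I_d.+1 -> K) : Prop :=
  [/\ eig_ordering A th, eig_ordering As ths,
      tridiag_cond (prim_idem A th) As &
      tridiag_cond (prim_idem As ths) A].

Definition ls_a (A As : Mat) (ths : 'I_d.+1 -> K) (i : nat) : K :=
  \tr (prim_idem As ths (inord i) *m A).
Definition ls_x (A As : Mat) (ths : 'I_d.+1 -> K) (i : nat) : K :=
  if i is i'.+1 then
    \tr (prim_idem As ths (inord i) *m A *m prim_idem As ths (inord i') *m A)
  else 0.

(* three-term recursion: returns (p_{n-1}, p_n), p_{-1}=0, p_0=1,
   p_{i+1} = (X - a_i) p_i - x_i p_{i-1} *)
Fixpoint ppair (a x : nat -> K) (n : nat) : {poly K} * {poly K} :=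
  match n with
  | 0 => (0, 1)
  | n'.+1 => let: (q, p) := ppair a x n' in
             (p, ('X - (a n')%:P) * p - x n' *: q)
  end.
Definition ls_p (A As : Mat) (ths : 'I_d.+1 -> K) (i : nat) : {poly K} :=
  (ppair (ls_a A As ths) (ls_x A As ths) i).2.

Definition ls_u (A As : Mat) (th ths : 'I_d.+1 -> K) (i : nat) : {poly K} :=
  (ls_p A As ths i).[th ord0]^-1 *: ls_p A As ths i.

End LS.

(* Main.v *)
Require Import Defs.
From HB Require Import structures.
From mathcomp Require Import all_boot all_order all_algebra.
From mathcomp Require Import zify ring.
Import GRing.Theory.
Set Implicit Arguments. Unset Strict Implicit. Unset Printing Implicit Defensive.
Local Open Scope ring_scope.

Lemma hmx_all0 (K : fieldType) (d : nat) (B : 'M[K]_d.+1) (th : 'I_d.+1 -> K) :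
  eig_ordering B th -> forall p : {poly K}, (forall k, p.[th k] = 0) ->
  horner_mx B p = 0.
Proof.
move=> [inj eig] p hp.
set rs := [seq th k | k <- enum 'I_d.+1].
have urs : uniq_roots rs by rewrite uniq_rootsE map_inj_uniq ?enum_uniq.
have Pi0: horner_mx B (\prod_(z <- rs) ('X - z%:P)) = 0.
  have [q hq] : exists q, char_poly B = q * \prod_(z <- rs) ('X - z%:P).
    apply: uniq_roots_prod_XsubC urs.
    apply/allP => z /mapP [k _ ->]; rewrite -eigenvalue_root_char; exact: eig.
  have cn0: char_poly B != 0 by rewrite -size_poly_eq0 size_char_poly.
  have Pn0 : \prod_(z <- rs) ('X - z%:P) != 0 :> {poly K}.
    by rewrite -size_poly_eq0 size_prod_XsubC.
  have qn0 : q != 0 by apply: contraNneq cn0; rewrite hq => ->; rewrite mul0r.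
  have sq : (size q <= 1)%N.
    have := size_char_poly B; rewrite hq size_mul // size_prod_XsubC size_map.
    rewrite size_enum_ord addnS /= => h; by rewrite -(leq_add2r d.+1) h add1n.
  have := Cayley_Hamilton B; rewrite hq rmorphM /= (size1_polyC sq) horner_mx_C.
  rewrite -mulmxE mul_scalar_mx => /eqP; rewrite scaler_eq0 => /orP [|/eqP //].
  move=> /eqP q0; move: qn0; by rewrite (size1_polyC sq) q0 eqxx.
have [r ->] : exists r, p = r * \prod_(z <- rs) ('X - z%:P).
  apply: uniq_roots_prod_XsubC urs.
  apply/allP => z /mapP [k _ ->]; exact/eqP/hp.
by rewrite rmorphM /= Pi0 mulr0.
Qed.

Lemma hmx_evalR (K : fieldType) (n m : nat) (B : 'M[K]_n.+1) (W : 'M[K]_(n.+1, m))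
  (t : K) : B *m W = t *: W -> forall p, horner_mx B p *m W = p.[t] *: W.
Proof.
move=> hW p; elim/poly_ind: p => [|p c IH].
  by rewrite rmorph0 mul0mx horner0 scale0r.
rewrite rmorphD rmorphM /= horner_mx_X horner_mx_C mulmxDl -mulmxE -mulmxA hW.
by rewrite -scalemxAr IH mul_scalar_mx scalerA hornerMXaddC scalerDl mulrC.
Qed.

Lemma hmx_evalL (K : fieldType) (n m : nat) (B : 'M[K]_n.+1) (W : 'M[K]_(m, n.+1))
  (t : K) : W *m B = t *: W -> forall p, W *m horner_mx B p = p.[t] *: W.
Proof.
move=> hW p; elim/poly_ind: p => [|p c IH].
  by rewrite rmorph0 mulmx0 horner0 scale0r.
rewrite rmorphD rmorphM /= horner_mx_X horner_mx_C mulmxDr -mulmxE mulmxA IH.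
by rewrite -scalemxAl hW scalerA mul_mx_scalar hornerMXaddC scalerDl.
Qed.

Definition Lp (K : fieldType) (d : nat) (th : 'I_d.+1 -> K) (i : 'I_d.+1) : {poly K} :=
  \prod_(j < d.+1 | j != i) ((th i - th j)^-1 *: ('X - (th j)%:P)).

Lemma prim_idemE (K : fieldType) (d : nat) (B : 'M[K]_d.+1) th i :
  prim_idem B th i = horner_mx B (Lp th i).
Proof.
rewrite /prim_idem /Lp rmorph_prod; apply: eq_bigr => j _.
by rewrite -mul_polyC rmorphM rmorphB /= !horner_mx_C horner_mx_X -mulmxE mul_scalar_mx.
Qed.

Lemma Lp_eval (K : fieldType) (d : nat) (th : 'I_d.+1 -> K) i k :
  injective th -> (Lp th i).[th k] = (i == k)%:R.
Proof.
move=> inj; rewrite /Lp horner_prod; case: eqP => [<-|/eqP ik].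
  apply: big1 => j ji; rewrite hornerZ !hornerE mulVf // subr_eq0.
  by apply: contra ji => /eqP/inj ->.
rewrite (bigD1 k) 1?eq_sym //= hornerZ !hornerE subrr mulr0 mul0r //.
Qed.

Lemma mf_props (K : fieldType) (d : nat) (B : 'M[K]_d.+1) (th : 'I_d.+1 -> K) :
  eig_ordering B th ->
  [/\ \sum_i prim_idem B th i = 1,
      forall i j, prim_idem B th i *m prim_idem B th j =
                  if i == j then prim_idem B th i else 0,
      forall i, B *m prim_idem B th i = th i *: prim_idem B th i,
      forall i, prim_idem B th i *m B = th i *: prim_idem B th i &
      forall i, \rank (prim_idem B th i) = 1%N].
Proof.
move=> eo; have [inj eig] := eo.
have BE i : B *m prim_idem B th i = th i *: prim_idem B th i.
  have h : horner_mx B (('X - (th i)%:P) * Lp th i) = 0.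
    apply: (hmx_all0 eo) => k.
    by rewrite hornerM Lp_eval // !hornerE; case: eqP => [->|]; rewrite ?subrr ?mul0r ?mulr0.
  rewrite rmorphM rmorphB /= horner_mx_X horner_mx_C -prim_idemE in h.
  rewrite -mulmxE mulmxBl mul_scalar_mx in h.
  by apply/eqP; rewrite -subr_eq0 h.
have EB i : prim_idem B th i *m B = th i *: prim_idem B th i.
  have := congr1 (horner_mx B) (mulrC (Lp th i) 'X).
  by rewrite !rmorphM /= horner_mx_X -prim_idemE -!mulmxE => ->; rewrite BE.
have EE i j : prim_idem B th i *m prim_idem B th j =
                  if i == j then prim_idem B th i else 0.
  rewrite {1}prim_idemE (hmx_evalR (BE j)) Lp_eval //.
  by case: eqP => [->|_]; rewrite ?scale1r ?scale0r.
split => //.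
  apply/eqP; rewrite -subr_eq0; apply/eqP.
  have -> : \sum_i prim_idem B th i - 1 = horner_mx B (\sum_i Lp th i - 1).
    by rewrite rmorphB rmorph_sum rmorph1 /=; congr (_ - _); apply: eq_bigr => i _; rewrite prim_idemE.
  apply: (hmx_all0 eo) => k; rewrite hornerD hornerN hornerC horner_sum.
  rewrite (bigD1 k) //= big1 ?Lp_eval ?eqxx ?addr0 ?subrr // => j jk.
  by rewrite Lp_eval // (negPf jk).
move=> i.
have rk1 j : (1 <= \rank (eigenspace B (th j)))%N.
  have /eigenvalueP [v hv vn0] := eig j.
  rewrite (leq_trans _ (mxrankS (introT eigenspaceP hv))) // lt0n mxrank_eq0 //.
have rkle : (\rank (eigenspace B (th i)) <= 1)%N.
  have := mxdirect_sum_eigenspace B (P := predT) (a_ := th) (fun x y _ _ => @inj x y).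
  move/mxdirectP => /= hs.
  have := rank_leq_row (\sum_j eigenspace B (th j))%MS; rewrite hs (bigD1 i) //=.
  have : (d <= \sum_(j < d.+1 | j != i) \rank (eigenspace B (th j)))%N.
    have := @leq_sum _ (index_enum 'I_d.+1) (fun j => j != i) (fun _ => 1%N) _ (fun j _ => rk1 j).
    by rewrite sum1_card cardC1 card_ord.
  move=> h1 h2; have h3 := leq_trans (leq_add (leqnn _) h1) h2; lia.
have /eigenvalueP [v hv vn0] := eig i.
apply/eqP; rewrite eqn_leq (leq_trans (mxrankS (introT eigenspaceP (EB i)))) //=.
rewrite lt0n mxrank_eq0; apply: contra vn0 => /eqP E0.
have := hmx_evalL hv (Lp th i); rewrite -prim_idemE E0 mulmx0 Lp_eval // eqxx scale1r.
by move <-.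
Qed.

Lemma rank1_dec (K : fieldType) (n : nat) (E : 'M[K]_n) :
  \rank E = 1%N -> exists (c : 'cV[K]_n) (r : 'rV[K]_n), E = c *m r.
Proof.
move=> hE; have := mulmx_base E.
move: (col_base E) (row_base E); rewrite hE => c r <-; by exists c, r.
Qed.

Lemma outer0 (K : fieldType) (n : nat) (c : 'cV[K]_n) (r : 'rV[K]_n) :
  c *m r = 0 -> c = 0 \/ r = 0.
Proof.
move=> h; case: (boolP [forall j, r 0 j == 0]) => [/forallP H|/forallPn [j Hj]].
  by right; apply/matrixP => i j; rewrite (ord1 i) mxE; apply/eqP.
left; apply/matrixP => i k; rewrite (ord1 k) mxE.
have /matrixP/(_ i j) := h; rewrite !mxE big_ord1 => /eqP.
by rewrite mulf_eq0 (negPf Hj) orbF => /eqP.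
Qed.

Lemma rank1_tr (K : fieldType) (n : nat) (E X : 'M[K]_n) :
  \rank E = 1%N -> E *m X *m E = \tr (E *m X) *: E.
Proof.
move=> /rank1_dec [c [r ->]].
have -> : c *m r *m X *m (c *m r) = c *m (r *m X *m c) *m r by rewrite !mulmxA.
rewrite [r *m X *m c]mx11_scalar mul_mx_scalar -scalemxAl; congr (_ *: _).
by rewrite -[in RHS]mulmxA (mxtrace_mulC c) {2}[r *m X *m c]mx11_scalar mxtrace_scalar.
Qed.

Lemma rank1_cancR (K : fieldType) (n : nat) (E M Y : 'M[K]_n) :
  \rank E = 1%N -> M *m E = M -> M != 0 -> M *m E *m Y = 0 -> E *m Y = 0.
Proof.
move=> /rank1_dec [c [r ->]] hM Mn0 h0.
have : (M *m c) *m (r *m Y) = 0 by rewrite -h0 !mulmxA.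
move=> /outer0 [h|h].
  by move: Mn0; rewrite -hM mulmxA h mul0mx eqxx.
by rewrite -mulmxA h mulmx0.
Qed.

Lemma rank1_cancL (K : fieldType) (n : nat) (E M Y : 'M[K]_n) :
  \rank E = 1%N -> E *m M = M -> M != 0 -> Y *m E *m M = 0 -> Y *m E = 0.
Proof.
move=> /rank1_dec [c [r ->]] hM Mn0 h0.
have : (Y *m c) *m (r *m M) = 0 by rewrite -h0 !mulmxA.
move=> /outer0 [h|h].
  by rewrite mulmxA h mul0mx.
by move: Mn0; rewrite -hM -mulmxA h mulmx0 eqxx.
Qed.

Lemma ppairS (K : fieldType) (a x : nat -> K) n : ppair a x n.+1 =
  ((ppair a x n).2, ('X - (a n)%:P) * (ppair a x n).2 - x n *: (ppair a x n).1).
Proof. by rewrite /=; case: (ppair a x n). Qed.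

Definition axF (K : fieldType) (d : nat) (F : nat -> 'M[K]_d.+1) C (i : nat) : K :=
  \tr (F i *m C).
Definition xxF (K : fieldType) (d : nat) (F : nat -> 'M[K]_d.+1) C (i : nat) : K :=
  if i is i'.+1 then \tr (F i *m C *m F i' *m C) else 0.

Definition Tm (K : fieldType) (d : nat) (F : nat -> 'M[K]_d.+1) C (n : nat) :=
  horner_mx C (ppair (axF F C) (xxF F C) n).2 *m F 0%N.

Lemma sum_zero (K : fieldType) (d : nat) (F : nat -> 'M[K]_d.+1) (Z : 'M[K]_d.+1) :
  \sum_(l < d.+1) F l = 1 -> (forall l, (l <= d)%N -> F l *m Z = 0) -> Z = 0.
Proof.
move=> hs hz; have -> : Z = (\sum_(l < d.+1) F l) *m Z by rewrite hs mulmxE mul1r.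
rewrite mulmx_suml big1 // => l _.
by apply: hz; rewrite -ltnS.
Qed.

Lemma hmx_pol (K : fieldType) (d : nat) (C : 'M[K]_d.+1) (W : 'M[K]_d.+1) a x (P Q : {poly K}) :
  horner_mx C (('X - a%:P) * P - x *: Q) *m W =
  C *m (horner_mx C P *m W) - a *: (horner_mx C P *m W) - x *: (horner_mx C Q *m W).
Proof.
rewrite -mul_polyC !rmorphB !rmorphM /= rmorphB /= horner_mx_X !horner_mx_C -!mulmxE.
by rewrite !mulmxBl !mul_scalar_mx -!scalemxAl !mulmxA.
Qed.

Lemma Trec (K : fieldType) (d : nat) (F : nat -> 'M[K]_d.+1) (C : 'M[K]_d.+1) :
 \sum_(l < d.+1) F l = 1 ->
 (forall k l, (k <= d)%N -> (l <= d)%N -> F k *m F l = if k == l then F k else 0) ->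
 (forall k, (k <= d)%N -> \rank (F k) = 1%N) ->
 (forall k l, (k <= d)%N -> (l <= d)%N -> ((k.+1 < l)%N \/ (l.+1 < k)%N) ->
      F k *m C *m F l = 0) ->
 forall i, (i <= d)%N ->
   [/\ F i *m Tm F C i = Tm F C i,
   (0 < i)%N -> Tm F C i = F i *m C *m Tm F C i.-1 &
   (0 < i)%N -> F i.-1 *m Tm F C i.-1 = Tm F C i.-1].
Proof.
move=> hs horth hrk htri; elim=> [_|i IH hi].
  by rewrite /Tm /= rmorph1 mul1mx horth // eqxx; split.
have [IH1 IH2 IH3] := IH (ltnW hi).
have TS : Tm F C i.+1 = C *m Tm F C i - axF F C i *: Tm F C i - xxF F C i *: Tm F C i.-1.
  rewrite /Tm ppairS hmx_pol; congr (_ - _).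
  case: i {IH IH1 IH2 IH3 hi} => [|i]; first by rewrite /= rmorph0 mul0mx !scale0r.
  by rewrite ppairS.
set T := Tm F C in IH IH1 IH2 IH3 TS *.
have key : T i.+1 = F i.+1 *m C *m T i.
  apply/eqP; rewrite -subr_eq0; apply/eqP; apply: (sum_zero hs) => l hl.
  have A1 : F l *m (C *m T i) = F l *m C *m F i *m T i.
    by rewrite -{1}IH1 !mulmxA.
  have A2 : F l *m T i = if l == i then T i else 0.
    by rewrite -{1}IH1 mulmxA horth ?(ltnW hi) //; case: eqP => [->|_]; rewrite ?mul0mx.
  have A3 : F l *m (xxF F C i *: T i.-1) = if i == l.+1 then xxF F C i *: T i.-1 else 0.
    case: (posnP i) => [i0|ip].
      by rewrite i0 /= ?scale0r ?mulmx0.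
    have e : F l *m (F i.-1 *m T i.-1) = if l == i.-1 then F i.-1 *m T i.-1 else 0.
      by rewrite mulmxA horth; [case: eqP => [->|_]; rewrite ?mul0mx| |lia].
    rewrite (IH3 ip) in e.
    rewrite -scalemxAr e.
    have -> : (l == i.-1) = (i == l.+1) by apply/eqP/eqP; lia.
    by case: eqP => _; rewrite ?scaler0.
  have A4 : F l *m (F i.+1 *m C *m T i) = if l == i.+1 then F i.+1 *m C *m T i else 0.
    by rewrite !mulmxA horth //; case: eqP => [->|_]; rewrite ?mul0mx.
  rewrite TS !mulmxBr -scalemxAr A1 A2 A3 A4.
  have [far|[->|[->|ei]]] : ((l.+1 < i)%N \/ (i.+1 < l)%N) \/ l = i \/ l = i.+1 \/ i = l.+1 by lia.
  - rewrite htri ?(ltnW hi) // mul0mx.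
    have -> : (l == i) = false by apply/eqP; lia.
    have -> : (i == l.+1) = false by apply/eqP; lia.
    have -> : (l == i.+1) = false by apply/eqP; lia.
    by rewrite !scaler0 !subr0.
  - rewrite eqxx rank1_tr ?hrk ?(ltnW hi) // -scalemxAl IH1.
    have -> : (i == i.+1) = false by apply/eqP; lia.
    by rewrite !subr0 subrr.
  - have -> : (i.+1 == i) = false by apply/eqP; lia.
    have -> : (i == i.+2) = false by apply/eqP; lia.
    by rewrite eqxx -mulmxA IH1 !scaler0 !subr0 subrr.
  - have -> : (l == i) = false by apply/eqP; lia.
    have -> : (l == i.+1) = false by apply/eqP; lia.
    rewrite ei eqxx scaler0 !subr0 /=.
    subst i; have l0 := ltn0Sn l.
    apply/eqP; rewrite subr_eq0; apply/eqP.
    rewrite (IH2 l0) /= -[in LHS](IH3 l0).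
    have -> : F l *m C *m F l.+1 *m (F l.+1 *m C *m (F l *m T l)) =
       (F l *m (C *m (F l.+1 *m F l.+1) *m C) *m F l) *m T l by rewrite !mulmxA.
    rewrite rank1_tr; last by apply: hrk; lia.
    rewrite -scalemxAl (IH3 l0) horth ?eqxx; try lia.
    suff -> : \tr (F l *m (C *m F l.+1 *m C)) = \tr (F l.+1 *m C *m F l *m C) by [].
    by rewrite -[in RHS]mulmxA (mxtrace_mulC (F l.+1 *m C)) !mulmxA.
split => //; first by rewrite key !mulmxA horth // eqxx.
Qed.

Lemma ppair_ext (K : fieldType) (a x a' x' : nat -> K) :
  (forall n, a n = a' n) -> (forall n, x n = x' n) ->
  forall n, ppair a x n = ppair a' x' n.
Proof.
move=> ha hx; elim=> [//|n IH]; by rewrite !ppairS IH ha hx.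
Qed.

Lemma hmx_tr (K : fieldType) (d : nat) (C : 'M[K]_d.+1) (p : {poly K}) :
  horner_mx C^T p = (horner_mx C p)^T.
Proof.
elim/poly_ind: p => [|p c IH]; first by rewrite !rmorph0 trmx0.
rewrite !rmorphD !rmorphM /= !horner_mx_X !horner_mx_C linearD /= tr_scalar_mx.
congr (_ + _); rewrite IH -!mulmxE -trmx_mul; congr (_^T).
have := congr1 (horner_mx C) (mulrC p 'X).
by rewrite !rmorphM /= horner_mx_X -!mulmxE.
Qed.

Lemma TrecL (K : fieldType) (d : nat) (F : nat -> 'M[K]_d.+1) (C : 'M[K]_d.+1) :
 \sum_(l < d.+1) F l = 1 ->
 (forall k l, (k <= d)%N -> (l <= d)%N -> F k *m F l = if k == l then F k else 0) ->
 (forall k, (k <= d)%N -> \rank (F k) = 1%N) ->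
 (forall k l, (k <= d)%N -> (l <= d)%N -> ((k.+1 < l)%N \/ (l.+1 < k)%N) ->
      F k *m C *m F l = 0) ->
 forall i, (i <= d)%N ->
   F 0%N *m horner_mx C (ppair (axF F C) (xxF F C) i).2 *m F i =
   F 0%N *m horner_mx C (ppair (axF F C) (xxF F C) i).2.
Proof.
move=> hs horth hrk htri i hi.
pose Ft n := (F n)^T.
have s1 : \sum_(l < d.+1) Ft l = 1 by rewrite /Ft -linear_sum /= hs trmx1.
have s2 : forall k l, (k <= d)%N -> (l <= d)%N -> Ft k *m Ft l = if k == l then Ft k else 0.
  move=> k l hk hl; rewrite /Ft -trmx_mul horth // eq_sym.
  by case: eqP => [->|_]; rewrite ?trmx0.
have s3 : forall k, (k <= d)%N -> \rank (Ft k) = 1%N.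
  by move=> k hk; rewrite /Ft mxrank_tr hrk.
have s4 : forall k l, (k <= d)%N -> (l <= d)%N -> ((k.+1 < l)%N \/ (l.+1 < k)%N) ->
      Ft k *m C^T *m Ft l = 0.
  move=> k l hk hl hkl; rewrite /Ft -!trmx_mul mulmxA htri ?trmx0 //; lia.
have [h1 _ _] := @Trec K d Ft C^T s1 s2 s3 s4 i hi.
move: h1; rewrite /Tm (@ppair_ext _ _ _ (axF F C) (xxF F C)).
- by rewrite hmx_tr /Ft -!trmx_mul => /trmx_inj.
- by move=> n; rewrite /axF /Ft -trmx_mul mxtrace_tr mxtrace_mulC.
- case=> [//|n]; rewrite /xxF /Ft -!trmx_mul mxtrace_tr.
  by rewrite !mulmxA mxtrace_mulC !mulmxA.
Qed.

Definition Fn (K : fieldType) (d : nat) (B : 'M[K]_d.+1) (th : 'I_d.+1 -> K) (k : nat) :=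
  prim_idem B th (inord k).

Lemma inord_eq (d : nat) (k l : nat) : (k <= d)%N -> (l <= d)%N ->
  ((inord k : 'I_d.+1) == inord l) = (k == l).
Proof.
move=> hk hl; apply/eqP/eqP => [h|->//].
by have := congr1 val h; rewrite /= !inordK.
Qed.

Lemma nat_props (K : fieldType) (d : nat) (B C : 'M[K]_d.+1) th :
 eig_ordering B th -> tridiag_cond (prim_idem B th) C ->
 [/\ \sum_(l < d.+1) Fn B th l = 1,
     forall k l, (k <= d)%N -> (l <= d)%N ->
        Fn B th k *m Fn B th l = if k == l then Fn B th k else 0,
     forall k, (k <= d)%N -> \rank (Fn B th k) = 1%N,
     forall k l, (k <= d)%N -> (l <= d)%N -> ((k.+1 < l)%N \/ (l.+1 < k)%N) ->
        Fn B th k *m C *m Fn B th l = 0 &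
     forall k, (k < d)%N -> Fn B th k *m C *m Fn B th k.+1 != 0 /\
                           Fn B th k.+1 *m C *m Fn B th k != 0].
Proof.
move=> eo tc; have [hs horth hBE hEB hrk] := mf_props eo.
split.
- by rewrite -hs; apply: eq_bigr => i _; rewrite /Fn inord_val.
- by move=> k l hk hl; rewrite /Fn horth inord_eq.
- by move=> k hk; rewrite /Fn hrk.
- move=> k l hk hl hkl; have [h _] := tc (inord k) (inord l).
  by apply: h; rewrite !inordK.
- move=> k hk; split.
    have [_ h] := tc (inord k) (inord k.+1); apply: h; rewrite !inordK //; lia.
  have [_ h] := tc (inord k.+1) (inord k); apply: h; rewrite !inordK //; lia.
Qed.

Lemma Fn_eval (K : fieldType) (d : nat) (B : 'M[K]_d.+1) th :
 eig_ordering B th -> forall k p,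
   horner_mx B p *m Fn B th k = p.[th (inord k)] *: Fn B th k /\
   Fn B th k *m horner_mx B p = p.[th (inord k)] *: Fn B th k.
Proof.
move=> eo k p; have [_ _ hBE hEB _] := mf_props eo.
by split; [apply: hmx_evalR; apply: hBE | apply: hmx_evalL; apply: hEB].
Qed.

Lemma Fn_comm (K : fieldType) (d : nat) (B : 'M[K]_d.+1) th :
 eig_ordering B th -> forall k, B *m Fn B th k = Fn B th k *m B.
Proof.
move=> eo k; have [_ _ hBE hEB _] := mf_props eo.
by rewrite /Fn hBE hEB.
Qed.

Lemma ls_dual (K : fieldType) (d : nat) (A As : 'M[K]_d.+1) th ths :
  leonard_system A As th ths -> leonard_system As A ths th.
Proof. by case=> *; split. Qed.

Lemma cross_nz (K : fieldType) (d : nat) (A As : 'M[K]_d.+1) th ths :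
  leonard_system A As th ths -> forall k, (k <= d)%N ->
  Fn A th 0%N *m Fn As ths k != 0.
Proof.
move=> [eo eos tc tcs] k hk.
have [hs horth hrk htri hnz] := nat_props eo tc.
have [hss horths hrks _ _] := nat_props eos tcs.
apply/negP => /eqP h0.
have all0 : forall h, (h <= d)%N -> forall l, (l <= h)%N -> Fn A th l *m Fn As ths k = 0.
  elim=> [_ l|h IH hh l hl]; first by rewrite leqn0 => /eqP ->.
  have IH' := IH (ltnW hh).
  case: (leqP l h) => [lh|hl']; first exact: IH'.
  have -> : l = h.+1 by lia.
  have [M0 _] := hnz h hh.
  apply: (rank1_cancR (hrk _ hh) _ M0).
    by rewrite -mulmxA horth // eqxx.
  have e1 : Fn A th h *m As *m Fn As ths k = 0.
    by rewrite -mulmxA (Fn_comm eos) mulmxA IH' // mul0mx.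
  have hh' : (h.+1 < d.+1)%N by [].
  rewrite -(mulmxA _ (Fn A th h.+1) (Fn A th h.+1)) horth // eqxx -e1.
  have -> : Fn A th h *m As *m Fn As ths k =
      (\sum_(l < d.+1) Fn A th h *m As *m Fn A th l) *m Fn As ths k.
    by rewrite -mulmx_sumr hs mulmxE mulr1.
  rewrite mulmx_suml (bigD1 (Ordinal hh')) //= big1 ?addr0 // => l' hl0.
  have hl'' : nat_of_ord l' != h.+1.
    by apply: contra hl0 => /eqP e; apply/eqP/val_inj.
  case: (leqP l' h) => [le|gt]; first by rewrite -mulmxA IH' ?mulmx0.
  have := ltn_ord l'; move: hl'' => /eqP hne => lt.
  rewrite htri ?mul0mx //; lia.
have : Fn As ths k = 0.
  have -> : Fn As ths k = \sum_(l < d.+1) Fn A th l *m Fn As ths k.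
    by rewrite -mulmx_suml hs mulmxE mul1r.
  by rewrite big1 // => l _; apply: (all0 d) => //; rewrite -ltnS.
move/eqP; rewrite -mxrank_eq0 hrks //.
Qed.

Lemma Tm_ls (K : fieldType) (d : nat) (A As : 'M[K]_d.+1) ths i :
  Tm (Fn As ths) A i = horner_mx A (ls_p A As ths i) *m Fn As ths 0%N.
Proof. by []. Qed.

Lemma p_nz (K : fieldType) (d : nat) (A As : 'M[K]_d.+1) th ths :
  leonard_system A As th ths -> forall i, (i <= d)%N ->
  (ls_p A As ths i).[th (inord 0%N)] != 0.
Proof.
move=> LS; have [eo eos tc tcs] := LS.
have [hss horths hrks htris hnzs] := nat_props eos tcs.
have TR := Trec hss horths hrks htris.
have Tnz : forall i, (i <= d)%N -> Tm (Fn As ths) A i != 0.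
  elim=> [_|i IH hi].
    rewrite /Tm /= rmorph1 mul1mx -mxrank_eq0 hrks //.
  have [_ h2 _] := TR i.+1 hi; have [h1 _ _] := TR i (ltnW hi).
  apply/negP => /eqP T0; move: (h2 erefl); rewrite T0 /= => /esym h.
  have [_ nz] := hnzs i hi; move/negP: nz; apply.
  apply/eqP; apply: (rank1_cancL (hrks _ (ltnW hi)) h1 (IH (ltnW hi))).
  by rewrite -mulmxA h1.
move=> i hi; apply/negP => /eqP p0.
have [h1 _ _] := TR i hi.
have := cross_nz LS hi; move/negP; apply; apply/eqP.
apply: (rank1_cancL (hrks _ hi) h1 (Tnz i hi)).
rewrite -mulmxA h1 Tm_ls mulmxA.
have [_ ->] := Fn_eval eo 0%N (ls_p A As ths i).
by rewrite p0 scale0r mul0mx.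
Qed.

Lemma nu_nz (K : fieldType) (d : nat) (A As : 'M[K]_d.+1) th ths :
  leonard_system A As th ths -> \tr (Fn As ths 0%N *m Fn A th 0%N) != 0.
Proof.
move=> LS; have [eo eos tc tcs] := LS.
have [hs horth hrk _ _] := nat_props eo tc.
have [hss horths hrks _ _] := nat_props eos tcs.
apply/negP => /eqP n0.
have M0 := cross_nz (ls_dual LS) (leq0n d).
have := cross_nz LS (leq0n d); move/negP; apply; apply/eqP.
apply: (rank1_cancR (hrk _ (leq0n d)) _ M0).
  by rewrite -mulmxA horth.
by rewrite -(mulmxA (Fn As ths 0%N) (Fn A th 0%N) (Fn A th 0%N)) horth // eqxx rank1_tr ?hrks // n0 scale0r.
Qed.

Lemma main_id (K : fieldType) (d : nat) (A As : 'M[K]_d.+1) th ths :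
  leonard_system A As th ths -> forall i j, (i <= d)%N -> (j <= d)%N ->
  (ls_p As A th j).[ths (inord i)] * (ls_p A As ths i).[th (inord 0%N)] *
     \tr (Fn As ths 0%N *m Fn A th 0%N) =
  (ls_p A As ths i).[th (inord j)] * (ls_p As A th j).[ths (inord 0%N)] *
     \tr (Fn As ths 0%N *m Fn A th 0%N).
Proof.
move=> LS i j hi hj; have [eo eos tc tcs] := LS.
have [hs horth hrk htri _] := nat_props eo tc.
have [hss horths hrks htris _] := nat_props eos tcs.
set P := horner_mx A (ls_p A As ths i).
set Q := horner_mx As (ls_p As A th j).
have hb : Fn As ths 0%N *m P *m Fn As ths i = Fn As ths 0%N *m P.
  exact: (TrecL hss horths hrks htris hi).
have [ha _ _] := Trec hs horth hrk htri hj.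
rewrite Tm_ls -/Q in ha.
transitivity (\tr (Fn As ths 0%N *m P *m Q *m Fn A th 0%N)).
  rewrite -hb -(mulmxA _ (Fn As ths i)).
  have [_ e] := Fn_eval eos i (ls_p As A th j); rewrite -/Q in e; rewrite e.
  rewrite -scalemxAr -scalemxAl mxtraceZ hb.
  have [e2 _] := Fn_eval eo 0%N (ls_p A As ths i); rewrite -/P in e2.
  by rewrite -mulmxA e2 -scalemxAr mxtraceZ mulrA.
rewrite -mulmxA -ha !mulmxA -(mulmxA _ P).
have [e3 _] := Fn_eval eo j (ls_p A As ths i); rewrite -/P in e3; rewrite e3.
rewrite -scalemxAr -!scalemxAl mxtraceZ -!mulmxA ha.
have [_ e4] := Fn_eval eos 0%N (ls_p As A th j); rewrite -/Q in e4.
by rewrite mulmxA e4 -scalemxAl mxtraceZ mulrA.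
Qed.

Unset Implicit Arguments.

Theorem theorem14p6 (K : fieldType) (d : nat) (A As : 'M[K]_d.+1)
    (th ths : 'I_d.+1 -> K) :
  leonard_system A As th ths ->
  forall i j : 'I_d.+1,
    (ls_u A As th ths i).[th j] = (ls_u As A ths th j).[ths i].
Proof.
move=> LS i j.
have hi : (i <= d)%N by rewrite -ltnS.
have hj : (j <= d)%N by rewrite -ltnS.
have i0 : inord 0%N = ord0 :> 'I_d.+1 by apply: val_inj; rewrite /= inordK.
have H := main_id LS hi hj.
have n0 := nu_nz LS.
have p0 := p_nz LS hi.
have q0 := p_nz (ls_dual LS) hj.
rewrite !inord_val i0 in H p0 q0.
rewrite /ls_u !hornerZ.
move/(mulIf n0): H => H.
set a := (ls_p A As ths i).[th ord0] in H p0 *.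
set b := (ls_p As A th j).[ths ord0] in H q0 *.
set x := (ls_p A As ths i).[th j] in H *.
set y := (ls_p As A th j).[ths i] in H *.
have -> : x = y * a / b by rewrite H mulfK.
field; exact/andP.
Qed.
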